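(* The map $f_I: W^I\times P^+\to P_I^+$, $f_I(v,\sigma)=v^{-1}(\lambda_v+\sigma)$, is well defined and is a bijection.
   Context: Let $\mathfrak a$ be a Euclidean space with inner product $(\cdot,\cdot)$ and $R\subset\mathfrak a^*$ a root system with Weyl group $W$; for $\alpha\in R$ put $\alpha^\vee=2\alpha/(\alpha,\alpha)$. Fix positive roots $R^+$ with simple roots $\Pi$ and simple reflections $S$; write $\beta<0$ if $\beta\in -R^+$ and $\beta>0$ if $\beta\in R^+$. Let $P=\{\lambda\in\mathfrak a^*:(\lambda,\alpha^\vee)\in\mathbb Z\ \forall\alpha\in R\}$ be the weight lattice, $P^+=\{\lambda\in P:(\lambda,\alpha^\vee)\ge0\ \forall\alpha\in\Pi\}$ the dominant weights, and for $\alpha\in\Pi$ let $\varpi_\alpha\in P$ be the fundamental weight, $(\varpi_\alpha,\beta^\vee)=\delta_{\alpha\beta}$ for $\beta\in\Pi$. Let $I\subset S$, $W_I$ the parabolic subgroup generated by $I$, $R_I\subset R$ its set of roots and $R_I^+=R_I\cap R^+$. Let $W^I=\{v\in W: v(R_I^+)\subset R^+\}$ (the minimal length representatives of $W/W_I$) and $P_I^+=\{\lambda\in P:(\lambda,\alpha)\ge0\ \forall \alpha\in R_I^+\}$. For $v\in W$ the Steinberg weight is $\lambda_v=\sum_{\alpha\in\Pi,\ v^{-1}\alpha<0}\varpi_\alpha\in P^+$. *)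

(* Defs.v *)
(* Euclidean space = 'rV[R]_n over R : realType with the
   standard dot product; roots, weights and W-elements are row vectors /
   matrices acting on the right (x |-> x *m M). *)
From HB Require Import structures.
From mathcomp Require Import all_boot all_order all_algebra.
From mathcomp Require Import reals.
Set Implicit Arguments. Unset Strict Implicit. Unset Printing Implicit Defensive.
Import Order.TTheory GRing.Theory Num.Theory.
Local Open Scope ring_scope.

Section RootSystems.
Variables (R : realType) (n : nat).
Implicit Types (x y a b : 'rV[R]_n) (rs J : seq 'rV[R]_n) (xi : 'rV[R]_n).

Definition dot x y : R := \sum_(i < n) x 0 i * y 0 i.

Definition coroot a : 'rV[R]_n := (2 / dot a a) *: a.

Definition refl a : 'M[R]_n := 1%:M - (coroot a)^T *m a.
Definition sact x a := x - dot x (coroot a) *: a.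

Definition is_intR (r : R) : Prop := exists z : int, r = z%:~R.

Definition root_system rs : Prop :=
  uniq rs /\
  [/\ (0 : 'rV[R]_n) \notin rs,
      (<<rs>>%VS = fullv),
      (forall a b, a \in rs -> b \in rs -> sact b a \in rs),
      (forall a b, a \in rs -> b \in rs -> is_intR (dot b (coroot a)))
    & (forall a (c : R), a \in rs -> c *: a \in rs -> c = 1 \/ c = -1)].

Definition regular rs xi : Prop := forall a, a \in rs -> dot a xi != 0.

Definition posr rs xi a : bool := (a \in rs) && (0 < dot a xi).
Definition negr rs xi a : bool := (a \in rs) && (dot a xi < 0).

Definition simple rs xi a : bool :=
  posr rs xi a && ~~ has (fun b => posr rs xi b && posr rs xi (a - b)) rs.

Inductive weyl rs : 'M[R]_n -> Prop :=
  | weyl1 : weyl rs 1%:M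
  | weylS a w : a \in rs -> weyl rs w -> weyl rs (refl a *m w).

Definition wact (w : 'M[R]_n) x : 'rV[R]_n := x *m w.

Definition rootsI rs J a : bool := (a \in rs) && (a \in <<J>>%VS).
Definition posI rs xi J a : bool := rootsI rs J a && posr rs xi a.

(* minimal length coset representatives W^J *)
Definition WI rs xi J (v : 'M[R]_n) : Prop :=
  weyl rs v /\ forall a, posI rs xi J a -> posr rs xi (wact v a).

Definition weight rs l : Prop := forall a, a \in rs -> is_intR (dot l (coroot a)).
Definition dominant rs xi l : Prop :=
  weight rs l /\ forall a, simple rs xi a -> 0 <= dot l (coroot a).
Definition dominantI rs xi J l : Prop :=
  weight rs l /\ forall a, posI rs xi J a -> 0 <= dot l a.

Definition fund_weights rs xi (fw : 'rV[R]_n -> 'rV[R]_n) : Prop :=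
  forall a, simple rs xi a ->
    weight rs (fw a) /\
    forall b, simple rs xi b -> dot (fw a) (coroot b) = (a == b)%:R.

Definition steinberg rs xi fw (v : 'M[R]_n) : 'rV[R]_n :=
  \sum_(a <- rs | simple rs xi a && negr rs xi (wact (invmx v) a)) fw a.

Definition fI rs xi fw (v : 'M[R]_n) sigma : 'rV[R]_n :=
  wact (invmx v) (steinberg rs xi fw v + sigma).

End RootSystems.

(* Main.v *)
Require Import Defs.
From HB Require Import structures.
From mathcomp Require Import all_boot all_order all_algebra.
From mathcomp Require Import reals.
From mathcomp Require Import ring lra zify.
Set Implicit Arguments. Unset Strict Implicit. Unset Printing Implicit Defensive.
Import Order.TTheory GRing.Theory Num.Theory.
Local Open Scope ring_scope.

Section Basic.
Variables (R : realType) (n : nat).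
Implicit Types (x y z a b : 'rV[R]_n) (g h : 'M[R]_n).

Lemma dotE x y : dot x y = (x *m y^T) 0 0.
Proof. by rewrite /dot !mxE; apply: eq_bigr => i _; rewrite mxE. Qed.

Lemma dotC x y : dot x y = dot y x.
Proof. by apply: eq_bigr => i _; rewrite mulrC. Qed.

Lemma dotDl x y z : dot (x + y) z = dot x z + dot y z.
Proof. by rewrite !dotE mulmxDl mxE. Qed.
Lemma dotZl (c : R) x y : dot (c *: x) y = c * dot x y.
Proof. by rewrite !dotE -scalemxAl mxE. Qed.
Lemma dotNl x y : dot (- x) y = - dot x y.
Proof. by rewrite !dotE mulNmx mxE. Qed.
Lemma dotBl x y z : dot (x - y) z = dot x z - dot y z.
Proof. by rewrite dotDl dotNl. Qed.
Lemma dot0l x : dot 0 x = 0.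
Proof. by rewrite dotE mul0mx mxE. Qed.
Lemma dotDr x y z : dot z (x + y) = dot z x + dot z y.
Proof. by rewrite dotC dotDl !(dotC z). Qed.
Lemma dotZr (c : R) x y : dot y (c *: x) = c * dot y x.
Proof. by rewrite dotC dotZl dotC. Qed.
Lemma dotNr x y : dot y (- x) = - dot y x.
Proof. by rewrite dotC dotNl dotC. Qed.
Lemma dotBr x y z : dot z (x - y) = dot z x - dot z y.
Proof. by rewrite dotDr dotNr. Qed.
Lemma dot0r x : dot x 0 = 0.
Proof. by rewrite dotC dot0l. Qed.
Lemma dot_suml (I : Type) (s : seq I) (P : pred I) (F : I -> 'rV[R]_n) y :
  dot (\sum_(i <- s | P i) F i) y = \sum_(i <- s | P i) dot (F i) y.
Proof.
elim/big_rec2: _ => [|i u v _ <-]; first by rewrite dot0l.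
by rewrite dotDl.
Qed.
Lemma dot_sumr (I : Type) (s : seq I) (P : pred I) (F : I -> 'rV[R]_n) y :
  dot y (\sum_(i <- s | P i) F i) = \sum_(i <- s | P i) dot y (F i).
Proof. rewrite dotC dot_suml; apply: eq_bigr => i _; exact: dotC. Qed.

Lemma dot_ge0 x : 0 <= dot x x.
Proof. by apply: sumr_ge0 => i _; rewrite -expr2 sqr_ge0. Qed.

Lemma dot_eq0 x : (dot x x == 0) = (x == 0).
Proof.
apply/idP/idP; last by move/eqP->; rewrite dot0l.
rewrite /dot psumr_eq0 => [H|i _]; last by rewrite -expr2 sqr_ge0.
apply/eqP/rowP => i; rewrite mxE.
by have /allP /(_ i) := H; rewrite mem_index_enum -expr2 sqrf_eq0 => /(_ isT) /eqP.
Qed.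

Lemma dot_gt0 x : x != 0 -> 0 < dot x x.
Proof. by move=> nx; rewrite lt_def dot_ge0 dot_eq0 nx. Qed.

Lemma dot_mulmx x y g : dot (x *m g) y = dot x (y *m g^T).
Proof. by rewrite !dotE trmx_mul trmxK mulmxA. Qed.

End Basic.

Lemma mx_ext (R : realType) (n : nat) (A B : 'M[R]_n) :
  (forall x : 'rV[R]_n, x *m A = x *m B) -> A = B.
Proof. by move=> H; apply/row_matrixP => i; rewrite !rowE H. Qed.

Section Refl.
Variables (R : realType) (n : nat).
Implicit Types (x y z a b : 'rV[R]_n) (g h : 'M[R]_n).

Lemma mulmx_tr x y : x *m y^T = (dot x y)%:M.
Proof. by rewrite [LHS]mx11_scalar dotE. Qed.

Lemma sactE x a : x *m refl a = sact x a.
Proof.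
by rewrite /refl mulmxBr mulmx1 mulmxA mulmx_tr mul_scalar_mx.
Qed.

Lemma dot_coroot x a : dot x (coroot a) = 2 * dot x a / dot a a.
Proof. by rewrite /coroot dotZr mulrAC. Qed.

Lemma dot_self_coroot a : a != 0 -> dot a (coroot a) = 2.
Proof.
move=> a0; have := dot_gt0 a0; rewrite dot_coroot => h.
by rewrite mulfK // gt_eqF.
Qed.

Lemma sact_self a : a != 0 -> sact a a = - a.
Proof. by move=> a0; rewrite /sact dot_self_coroot // scaler_nat mulr2n opprD addrA subrr add0r. Qed.

Lemma refl_invol a : a != 0 -> refl a *m refl a = 1%:M.
Proof.
move=> a0; apply: mx_ext => x; rewrite mulmxA !sactE mulmx1 /sact.
rewrite dotBl dotZl dot_self_coroot //.
apply/rowP => i; rewrite !mxE; ring.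
Qed.

Lemma refl_tr a : (refl a)^T = refl a.
Proof.
rewrite /refl /coroot linearB /= trmx1 trmx_mul trmxK; congr (_ - _).
by rewrite -scalemxAr [X in _ = X *m _]linearZ /= -scalemxAl.
Qed.

Definition orth g := g *m g^T = 1%:M.

Lemma orth_refl a : a != 0 -> orth (refl a).
Proof. by move=> a0; rewrite /orth refl_tr refl_invol. Qed.

Lemma orth1 : orth 1%:M.
Proof. by rewrite /orth trmx1 mulmx1. Qed.

Lemma orth_mul g h : orth g -> orth h -> orth (g *m h).
Proof.
rewrite /orth trmx_mul => Hg Hh.
by rewrite mulmxA -(mulmxA g) Hh mulmx1 Hg.
Qed.

Lemma orthT g : orth g -> g^T *m g = 1%:M.
Proof. exact: mulmx1C. Qed.

Lemma orth_tr g : orth g -> orth g^T.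
Proof. by move=> H; rewrite /orth trmxK orthT. Qed.

Lemma orth_inv g : orth g -> invmx g = g^T.
Proof.
move=> H; have [gu _] := mulmx1_unit H.
by rewrite -[LHS]mulmx1 -H mulmxA mulVmx // mul1mx.
Qed.

Lemma dot_orth g x y : orth g -> dot (x *m g) (y *m g) = dot x y.
Proof. by move=> H; rewrite dot_mulmx -mulmxA H mulmx1. Qed.

Lemma coroot_orth g a : orth g -> coroot (a *m g) = coroot a *m g.
Proof. by move=> H; rewrite /coroot dot_orth // scalemxAl. Qed.

Lemma refl_conj g a : orth g -> refl (a *m g) = g^T *m refl a *m g.
Proof.
move=> H; apply: mx_ext => x; rewrite sactE !mulmxA sactE /sact.
rewrite mulmxBl -scalemxAl -mulmxA orthT // mulmx1 coroot_orth // dot_mulmx trmxK.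
done.
Qed.

Lemma coroot_opp a : coroot (- a) = - coroot a.
Proof. by rewrite /coroot dotNl dotNr opprK scalerN. Qed.

Lemma refl_opp a : refl (- a) = refl a.
Proof. by apply: mx_ext => x; rewrite !sactE /sact coroot_opp dotNr scaleNr scalerN opprK. Qed.

End Refl.

Lemma count_lt (T : eqType) (p q : pred T) (s : seq T) (x : T) :
  (forall y, p y -> q y) -> x \in s -> q x -> ~~ p x -> (count p s < count q s)%N.
Proof.
move=> pq; elim: s => //= y s IH; rewrite in_cons => /orP [/eqP ->|xs] qx npx.
  rewrite (negbTE npx) qx add0n add1n ltnS.
  elim: s {IH} => //= z s IHs; rewrite leq_add //.
  by case: (p z) (pq z) => //= ->.
rewrite -addnS leq_add //; last exact: IH.
by case: (p y) (pq y) => //= ->.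
Qed.

Lemma count_le (T : Type) (p q : pred T) (s : seq T) :
  (forall y, p y -> q y) -> (count p s <= count q s)%N.
Proof.
move=> pq; elim: s => //= z s IHs; rewrite leq_add //.
by case: (p z) (pq z) => //= ->.
Qed.

Section RS.
Variables (R : realType) (n : nat) (rs : seq 'rV[R]_n) (xi : 'rV[R]_n).
Hypothesis Hrs : root_system rs.
Hypothesis Hreg : regular rs xi.
Implicit Types (x y z a b : 'rV[R]_n) (g h : 'M[R]_n).

Local Notation posr := (posr rs xi).
Local Notation negr := (negr rs xi).
Local Notation simple := (simple rs xi).

Lemma rs_uniq : uniq rs. Proof. by case: Hrs. Qed.
Lemma rs_neq0 a : a \in rs -> a != 0.
Proof. by case: Hrs => _ [H _ _ _ _] ar; apply: contraNneq H => <-. Qed.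
Lemma rs_refl a b : a \in rs -> b \in rs -> b *m refl a \in rs.
Proof. by case: Hrs => _ [_ _ H _ _] ar br; rewrite sactE H. Qed.
Lemma rs_int a b : a \in rs -> b \in rs -> is_intR (dot b (coroot a)).
Proof. by case: Hrs => _ [_ _ _ H _]; apply: H. Qed.
Lemma rs_red a (c : R) : a \in rs -> c *: a \in rs -> c = 1 \/ c = -1.
Proof. by case: Hrs => _ [_ _ _ _ H]; apply: H. Qed.
Lemma rs_opp a : a \in rs -> - a \in rs.
Proof. by move=> ar; rewrite -(sact_self (rs_neq0 ar)) -sactE rs_refl. Qed.
Lemma rs_oppE a : (- a \in rs) = (a \in rs).
Proof. by apply/idP/idP => [/rs_opp|/rs_opp //]; rewrite opprK. Qed.

Lemma weyl_orth g : weyl rs g -> orth g.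
Proof. elim=> [|a w ar _ IH]; [exact: orth1 | exact/orth_mul/IH/orth_refl/rs_neq0]. Qed.

Lemma weyl_rs g a : weyl rs g -> a \in rs -> a *m g \in rs.
Proof.
move=> wg; elim: wg a => [|b w br _ IH] a ar; first by rewrite mulmx1.
by rewrite mulmxA IH // rs_refl.
Qed.

Lemma weyl_mulr g a : weyl rs g -> a \in rs -> weyl rs (g *m refl a).
Proof.
elim=> [|b w br _ IH] ar; first by rewrite mul1mx -[refl a]mulmx1; constructor => //; constructor.
by rewrite -mulmxA; constructor => //; apply: IH.
Qed.

Lemma weyl_mul g h : weyl rs g -> weyl rs h -> weyl rs (g *m h).
Proof.
move=> wg wh; elim: wg => [|b w br _ IH]; first by rewrite mul1mx.
by rewrite -mulmxA; constructor.
Qed.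

Lemma weyl_tr g : weyl rs g -> weyl rs g^T.
Proof.
elim=> [|b w br _ IH]; first by rewrite trmx1; constructor.
by rewrite trmx_mul refl_tr; apply: weyl_mulr.
Qed.

Lemma weyl_refl a : a \in rs -> weyl rs (refl a).
Proof. by move=> ar; rewrite -[refl a]mulmx1; constructor => //; constructor. Qed.

Lemma weyl_rsT g a : weyl rs g -> a \in rs -> a *m g^T \in rs.
Proof. by move=> /weyl_tr; apply: weyl_rs. Qed.

Lemma root_dichot a : a \in rs -> posr a || negr a.
Proof.
move=> ar; rewrite /Defs.posr /Defs.negr ar /=.
by have := Hreg ar; rewrite neq_lt orbC.
Qed.

Lemma posr_negr a : posr a -> negr a -> False.
Proof. by rewrite /Defs.posr /Defs.negr => /andP [_ h1] /andP [_ h2]; move: (lt_trans h2 h1); rewrite ltxx. Qed.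

Lemma posr_opp a : posr (- a) = negr a.
Proof. by rewrite /Defs.posr /Defs.negr rs_oppE dotNl oppr_gt0. Qed.
Lemma negr_opp a : negr (- a) = posr a.
Proof. by rewrite -posr_opp opprK. Qed.

Lemma posr_rs a : posr a -> a \in rs. Proof. by case/andP. Qed.
Lemma negr_rs a : negr a -> a \in rs. Proof. by case/andP. Qed.
Lemma posr_xi a : posr a -> 0 < dot a xi. Proof. by case/andP. Qed.
Lemma simple_posr a : simple a -> posr a. Proof. by case/andP. Qed.
Lemma simple_rs a : simple a -> a \in rs. Proof. by move/simple_posr/posr_rs. Qed.

Lemma notposr_negr a : a \in rs -> ~~ posr a -> negr a.
Proof. by move=> /root_dichot; case: (posr a). Qed.

Lemma dot_coroot_sgn x a : dot x (coroot a) = (2 / dot a a) * dot x a.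
Proof. by rewrite /coroot dotZr. Qed.

Lemma coef_gt0 a : a \in rs -> 0 < 2 / dot a a.
Proof. by move=> ar; rewrite divr_gt0 // dot_gt0 // rs_neq0. Qed.

Lemma coroot_ge0 x a : a \in rs -> (0 <= dot x (coroot a)) = (0 <= dot x a).
Proof. by move=> ar; rewrite dot_coroot_sgn pmulr_rge0 // coef_gt0. Qed.
Lemma coroot_gt0 x a : a \in rs -> (0 < dot x (coroot a)) = (0 < dot x a).
Proof. by move=> ar; rewrite dot_coroot_sgn pmulr_rgt0 // coef_gt0. Qed.
Lemma coroot_eq0 x a : a \in rs -> (dot x (coroot a) == 0) = (dot x a == 0).
Proof. by move=> ar; rewrite dot_coroot_sgn mulf_eq0 gt_eqF ?coef_gt0. Qed.


Lemma sum_ge0_seq (l : seq 'rV[R]_n) (P : pred 'rV[R]_n) (F : 'rV[R]_n -> R) :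
  (forall x, x \in l -> P x -> 0 <= F x) -> 0 <= \sum_(x <- l | P x) F x.
Proof. by move=> H; rewrite big_seq_cond; apply: sumr_ge0 => x /andP [xl Px]; exact: H. Qed.

Lemma sum_gt0_seq (l : seq 'rV[R]_n) (P : pred 'rV[R]_n) (F : 'rV[R]_n -> R) :
  (forall x, x \in l -> P x -> 0 < F x) -> has P l -> 0 < \sum_(x <- l | P x) F x.
Proof.
elim: l => //= y l IH H; rewrite big_cons; case: ifP => Py /=.
  move=> _; have h1 := H y (mem_head _ _) Py.
  have h2 : 0 <= \sum_(x <- l | P x) F x.
    by apply: sum_ge0_seq => x xl Px; apply/ltW/H => //; rewrite in_cons xl orbT.
  lra.
by move=> hl; apply: IH => // x xl Px; apply: H => //; rewrite in_cons xl orbT.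
Qed.

Lemma sum_eq0_seq (l : seq 'rV[R]_n) (F : 'rV[R]_n -> R) :
  (forall x, x \in l -> 0 <= F x) -> \sum_(x <- l) F x = 0 -> forall x, x \in l -> F x = 0.
Proof.
move=> H; rewrite big_seq_cond => /eqP; rewrite psumr_eq0.
  by move=> /allP A x xl; have := A x xl; rewrite xl /= => /eqP.
by move=> x /andP [xl _]; apply: H.
Qed.

Definition msr b := count (fun y => posr y && (dot y xi < dot b xi)) rs.

Lemma msr_lt b c : posr b -> dot b xi < dot c xi -> (msr b < msr c)%N.
Proof.
move=> pb lt; apply: (@count_lt _ _ _ _ b).
- by move=> y /andP [-> h] /=; apply: lt_trans lt.
- exact: posr_rs.
- by rewrite pb lt.
- by rewrite ltxx andbF.
Qed.

Lemma posr_decomp b : posr b ->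
  exists l : seq 'rV[R]_n, [/\ all simple l, l != [::] & b = \sum_(x <- l) x].
Proof.
move=> pb; move: {2}(msr b).+1 (ltnSn (msr b)) => N.
elim: N b pb => // N IH b pb hm.
case sb: (simple b).
  by exists [:: b]; rewrite /= sb big_seq1.
move: sb; rewrite /Defs.simple pb /= => /negbFE /hasP [c cr /andP [pc pbc]].
have h1 : dot c xi < dot b xi by have := posr_xi pbc; rewrite dotBl; lra.
have h2 : dot (b - c) xi < dot b xi by have := posr_xi pc; rewrite dotBl; lra.
have hm' : (msr b <= N)%N by [].
have [l1 [a1 _ e1]] := IH c pc (leq_trans (msr_lt pc h1) hm').
have [l2 [a2 n2 e2]] := IH (b - c) pbc (leq_trans (msr_lt pbc h2) hm').
exists (l1 ++ l2); split; first by rewrite all_cat a1 a2.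
  by case: (l1).
by rewrite big_cat /= -e1 -e2 addrC subrK.
Qed.

Lemma dom_pos l b : (forall a, simple a -> 0 <= dot l (coroot a)) -> posr b -> 0 <= dot l b.
Proof.
move=> H pb; have [s [sa _ ->]] := posr_decomp pb.
rewrite dot_sumr; apply: sum_ge0_seq => x xs _.
have sx : simple x by apply: (allP sa).
by rewrite -coroot_ge0 ?simple_rs // H.
Qed.


Lemma simple_obtuse a c : simple a -> simple c -> a != c -> dot a c <= 0.
Proof.
move=> sa sc ne; rewrite leNgt; apply/negP => pos.
have ar := simple_rs sa; have cr := simple_rs sc.
have A0 : 0 < dot a a by apply/dot_gt0/rs_neq0.
have B0 : 0 < dot c c by apply/dot_gt0/rs_neq0.
set A := dot a a in A0; set B := dot c c in B0; set C := dot a c in pos.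
have CS : C ^+ 2 < A * B.
  set t := C / B; set x := a - t *: c.
  have ex : dot x x = A - 2 * t * C + t ^+ 2 * B.
    rewrite /x !(dotBl, dotBr, dotZl, dotZr) (dotC c a) -/A -/B -/C; ring.
  have ex2 : B * dot x x = A * B - C ^+ 2.
    by rewrite ex /t; field; rewrite gt_eqF.
  have [x0|xn0] := eqVneq x 0.
    have ea : a = t *: c by apply: subr0_eq.
    have := @rs_red c t cr; rewrite -ea => /(_ ar) [t1|tm1].
      by move: ne; rewrite ea t1 scale1r eqxx.
    by move: pos; rewrite /C ea tm1 scaleN1r dotNl -/B; lra.
  have := mulr_gt0 B0 (dot_gt0 xn0); rewrite ex2; lra.
have [z1 e1] := rs_int cr ar.
have [z2 e2] := rs_int ar cr.
have f1 : dot a (coroot c) = 2 * C / B by rewrite dot_coroot.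
have f2 : dot c (coroot a) = 2 * C / A by rewrite dot_coroot dotC.
have z1p : (0 < z1)%R.
  by rewrite -(ltr0z R) -e1 f1 divr_gt0 // mulr_gt0.
have z2p : (0 < z2)%R.
  by rewrite -(ltr0z R) -e2 f2 divr_gt0 // mulr_gt0.
have z12 : (z1 * z2 < 4)%R.
  rewrite -(ltr_int R) intrM -e1 -e2 f1 f2.
  have -> : 2 * C / B * (2 * C / A) = 4 * (C ^+ 2 / (A * B)).
    by field; rewrite !gt_eqF.
  have : C ^+ 2 / (A * B) < 1 by rewrite ltr_pdivrMr ?mulr_gt0 // mul1r.
  have -> : (4%:~R : R) = 4 by [].
  lra.
have amc : a - c \in rs.
  have : z1 = 1 \/ z2 = 1 by lia.
  case=> [z11|z21].
    by move: (rs_refl cr ar); rewrite sactE /sact e1 z11 scale1r.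
  by move: (rs_refl ar cr); rewrite sactE /sact e2 z21 scale1r => /rs_opp; rewrite opprB.
case/orP: (root_dichot amc) => [pamc|namc].
  move: sa; rewrite /Defs.simple => /andP [_ /hasP []].
  by exists c => //; rewrite simple_posr.
move: sc; rewrite /Defs.simple => /andP [_ /hasP []].
by exists a => //; rewrite simple_posr //= -opprB posr_opp.
Qed.

Lemma sum_split (l : seq 'rV[R]_n) a :
  \sum_(x <- l) x = (count (pred1 a) l)%:R *: a + \sum_(x <- l | x != a) x.
Proof.
elim: l => [|y l IH]; first by rewrite !big_nil scale0r addr0.
rewrite !big_cons /=; case: eqP => [->|_] /=.
  by rewrite IH natrD scalerDl scale1r addrA.
by rewrite IH add0n addrCA.
Qed.

Lemma refl_simple_pos a b : simple a -> posr b -> b != a -> posr (b *m refl a).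
Proof.
move=> sa pb ne.
have ar := simple_rs sa; have br := posr_rs pb.
have bsr : b *m refl a \in rs by rewrite rs_refl.
case/orP: (root_dichot bsr) => // nbs.
exfalso.
set k := dot b (coroot a).
have pd : posr (k *: a - b) by rewrite -posr_opp in nbs; rewrite -opprB; move: nbs; rewrite sactE /sact.
have [l1 [a1 _ e1]] := posr_decomp pb.
have [l2 [a2 _ e2]] := posr_decomp pd.
set l := l1 ++ l2.
have al : all simple l by rewrite all_cat a1 a2.
have el : \sum_(x <- l) x = k *: a by rewrite big_cat /= -e1 -e2 addrC subrK.
set m : R := (count (pred1 a) l)%:R.
set X := \sum_(x <- l | x != a) x.
have eX : X = (k - m) *: a.
  by rewrite scalerBl -el (sum_split l a) -/m -/X addrC addKr.
case h: (has (fun x => x != a) l).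
  have Xxi : 0 < dot X xi.
    rewrite /X dot_suml; apply: sum_gt0_seq => // x xl _.
    by apply/posr_xi/simple_posr/(allP al).
  have km : 0 < k - m.
    by move: Xxi; rewrite eX dotZl pmulr_lgt0 // posr_xi // simple_posr.
  have aX : dot a X <= 0.
    rewrite /X dot_sumr big_seq_cond; apply: sumr_le0 => x /andP [xl xa].
    by apply: simple_obtuse => //; [apply: (allP al) | rewrite eq_sym].
  have X0 : X != 0 by apply: contraTneq Xxi => ->; rewrite dot0l ltxx.
  have := dot_gt0 X0; rewrite {1}eX dotZl.
  nra.
have h1 : ~~ has (fun x => x != a) l1 by move: h; rewrite /l has_cat; case: has.
have eb : b = (count (pred1 a) l1)%:R *: a.
  rewrite e1 (sum_split l1 a) big1_seq ?addr0 // => x /andP [xa xl1].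
  by move: h1 => /hasP []; exists x.
have := @rs_red a (count (pred1 a) l1)%:R ar; rewrite -eb => /(_ br) [c1|cm1].
  by move: ne; rewrite eb c1 scale1r eqxx.
by have := ler0n R (count (pred1 a) l1); rewrite cm1; lra.
Qed.


Definition wprod (s : seq 'rV[R]_n) : 'M[R]_n := foldr (fun a g => refl a *m g) 1%:M s.

Lemma wprod_cat s1 s2 : wprod (s1 ++ s2) = wprod s1 *m wprod s2.
Proof. by elim: s1 => [|a s IH] /=; rewrite ?mul1mx // IH mulmxA. Qed.

Lemma wprod_tr s : (wprod s)^T = wprod (rev s).
Proof.
elim: s => [|a s IH] /=; first by rewrite trmx1.
by rewrite trmx_mul IH refl_tr rev_cons -cats1 wprod_cat /= mulmx1.
Qed.

Lemma wprod_weyl s : all simple s -> weyl rs (wprod s).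
Proof.
elim: s => [|a s IH] /=; first by constructor.
by case/andP => sa /IH; constructor => //; apply: simple_rs.
Qed.

Lemma pos_conj b : posr b ->
  exists s a, [/\ all simple s, simple a & b = a *m wprod s].
Proof.
move=> pb; move: {2}(msr b).+1 (ltnSn (msr b)) => N.
elim: N b pb => // N IH b pb hm.
case sb: (simple b).
  by exists [::], b; rewrite /= mulmx1.
have [l [al ln eb]] := posr_decomp pb.
have bb : 0 < dot b b by apply/dot_gt0/rs_neq0/posr_rs.
have hx : has (fun x => 0 < dot b x) l.
  apply/negPn/negP => nh; move: bb.
  rewrite {2}eb dot_sumr big_seq_cond; set S := (X in 0 < X).
  have : S <= 0.
    apply: sumr_le0 => y /andP [yl _].
    by rewrite leNgt; apply/negP => hy; case/negP: nh; apply/hasP; exists y.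
  lra.
case/hasP: hx => x xl bx.
have sx : simple x by apply: (allP al).
have xr := simple_rs sx.
have kp : 0 < dot b (coroot x) by rewrite coroot_gt0.
have bnx : b != x by apply: contraFneq sb => ->.
have pb' := refl_simple_pos sx pb bnx.
have lt : dot (b *m refl x) xi < dot b xi.
  rewrite sactE /sact dotBl dotZl.
  have := mulr_gt0 kp (posr_xi (simple_posr sx)); lra.
have hm' : (msr b <= N)%N by [].
have [s [a [als sa e]]] := IH _ pb' (leq_trans (msr_lt pb' lt) hm').
exists (rcons s x), a; split => //; first by rewrite all_rcons sx.
rewrite -cats1 wprod_cat /= mulmx1 mulmxA -e -mulmxA refl_invol ?mulmx1 //.
exact: rs_neq0.
Qed.

Lemma weyl_WS g : weyl rs g -> exists s, all simple s /\ g = wprod s.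
Proof.
elim=> [|a w ar _ [s [als ->]]]; first by exists [::].
have [b [pb eb]] : exists b, posr b /\ refl a = refl b.
  case/orP: (root_dichot ar) => h; first by exists a.
  by exists (- a); rewrite posr_opp refl_opp.
have [t [c [alt sc ebc]]] := pos_conj pb.
have og : orth (wprod t) by apply/weyl_orth/wprod_weyl.
exists (rev t ++ c :: t ++ s); split.
  by rewrite all_cat all_rev alt /= sc all_cat alt als.
rewrite eb ebc refl_conj // wprod_tr wprod_cat /= wprod_cat !mulmxA.
done.
Qed.

Lemma deletion s c : all simple s -> posr c -> negr (c *m wprod s) ->
  exists s', [/\ all simple s', size s' = (size s).-1 & refl c *m wprod s = wprod s'].
Proof.
elim: s c => [|a s IH] c /=.
  by move=> _ pc; rewrite mulmx1 => nc; case: (posr_negr pc nc).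
case/andP => sa als pc.
have ar := simple_rs sa.
have [->|ne] := eqVneq c a.
  move=> _; exists s; split => //.
  by rewrite mulmxA refl_invol ?mul1mx // rs_neq0.
have pc' := refl_simple_pos sa pc ne.
rewrite mulmxA => nc'.
have [s'' [als'' sz e]] := IH _ als pc' nc'.
case: s {IH} als sz e nc' => [|y s] als sz e nc'.
  by move: nc'; rewrite /= mulmx1 => nc'; case: (posr_negr pc' nc').
exists (a :: s''); split; first by rewrite /= sa.
  by rewrite /= sz.
have ora := orth_refl (rs_neq0 ar).
have -> : refl c = refl a *m refl (c *m refl a) *m refl a.
  rewrite refl_conj // refl_tr !mulmxA refl_invol ?mul1mx ?rs_neq0 //.
  by rewrite -mulmxA refl_invol ?mulmx1 ?rs_neq0.
by rewrite /= -e -!mulmxA (mulmxA (refl a) (refl a)) refl_invol ?mul1mx ?rs_neq0.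
Qed.

Lemma WS_trivial s : all simple s -> (forall b, posr b -> posr (b *m wprod s)) ->
  wprod s = 1%:M.
Proof.
move: {2}(size s).+1 (ltnSn (size s)) => N.
elim: N s => // N IH [|a s] //= hs als H.
case/andP: als => sa als.
have ar := simple_rs sa.
have asr : a *m wprod s \in rs by apply/weyl_rs/ar/wprod_weyl.
case/orP: (root_dichot asr) => h.
  have := H a (simple_posr sa).
  rewrite mulmxA sactE sact_self ?rs_neq0 // mulNmx posr_opp => h'.
  by case: (posr_negr h h').
have [s'' [als'' sz e]] := deletion als (simple_posr sa) h.
rewrite e; apply: IH => //; first by rewrite sz; case: (s) hs => //= ? ? ; rewrite ltnS => /ltnW.
by rewrite -e.
Qed.


Lemma intR0 : is_intR (0 : R). Proof. by exists 0. Qed.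
Lemma intRD (x y : R) : is_intR x -> is_intR y -> is_intR (x + y).
Proof. by move=> [a ->] [b ->]; exists (a + b); rewrite intrD. Qed.
Lemma intRN (x : R) : is_intR x -> is_intR (- x).
Proof. by move=> [a ->]; exists (- a); rewrite mulrNz. Qed.

Lemma weightD l1 l2 : weight rs l1 -> weight rs l2 -> weight rs (l1 + l2).
Proof. by move=> h1 h2 a ar; rewrite dotDl; apply: intRD; [apply: h1|apply: h2]. Qed.
Lemma weightN l : weight rs l -> weight rs (- l).
Proof. by move=> h a ar; rewrite dotNl; apply/intRN/h. Qed.
Lemma weightB l1 l2 : weight rs l1 -> weight rs l2 -> weight rs (l1 - l2).
Proof. by move=> h1 h2; apply: weightD => //; apply: weightN. Qed.
Lemma weight_sum (I : Type) (s : seq I) (P : pred I) (F : I -> 'rV[R]_n) :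
  (forall i, P i -> weight rs (F i)) -> weight rs (\sum_(i <- s | P i) F i).
Proof.
move=> H; elim/big_rec: _ => [|i x Pi wx]; first by move=> a ar; rewrite dot0l; exact: intR0.
by apply: weightD => //; apply: H.
Qed.

Lemma weight_mul g l : weyl rs g -> weight rs l -> weight rs (l *m g).
Proof.
move=> wg wl a ar; rewrite dot_mulmx -coroot_orth; last exact/orth_tr/weyl_orth.
by apply: wl; apply: weyl_rsT.
Qed.

Lemma weight_mulT g l : weyl rs g -> weight rs l -> weight rs (l *m g^T).
Proof. by move=> /weyl_tr; apply: weight_mul. Qed.

Lemma weyl_inv g : weyl rs g -> invmx g = g^T.
Proof. by move/weyl_orth/orth_inv. Qed.

Lemma sum_ind (s : seq 'rV[R]_n) (P : pred 'rV[R]_n) x : uniq s ->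
  \sum_(a <- s | P a) (a == x)%:R = ((P x) && (x \in s))%:R :> R.
Proof.
elim: s => [|y s IH] /=; first by rewrite big_nil andbF.
case/andP => ys us; rewrite big_cons IH // in_cons.
have [<-|ne] := eqVneq y x.
  by rewrite (negbTE ys) !andbF /=; case: (P y); rewrite ?addr0.
by case: (P y); rewrite /= ?add0r.
Qed.

Variable fw : 'rV[R]_n -> 'rV[R]_n.
Hypothesis Hfw : fund_weights rs xi fw.

Local Notation stein := (steinberg rs xi fw).

Lemma stein_weight v : weight rs (stein v).
Proof. by apply: weight_sum => a /andP [sa _]; case: (Hfw sa). Qed.

Lemma stein_coroot v a : simple a ->
  dot (stein v) (coroot a) = (negr (a *m invmx v))%:R.
Proof.
move=> sa; rewrite /steinberg dot_suml.
rewrite (eq_bigr (fun b => (b == a)%:R)); last first.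
  by move=> b /andP [sb _]; case: (Hfw sb) => _ ->.
by rewrite sum_ind ?rs_uniq // sa simple_rs // andbT.
Qed.

Lemma stein_ge0 v a : simple a -> 0 <= dot (stein v) (coroot a).
Proof. by move=> sa; rewrite stein_coroot // ler0n. Qed.

Lemma nu_dom v sg : dominant rs xi sg -> forall a, simple a ->
  0 <= dot (stein v + sg) (coroot a).
Proof.
case=> _ hs a sa; rewrite dotDl; have := stein_ge0 v sa; have := hs a sa; lra.
Qed.

Lemma part1 J v sg : WI rs xi J v -> dominant rs xi sg ->
     dominantI rs xi J (fI rs xi fw v sg).
Proof.
case=> wv hv ds; rewrite /fI /wact weyl_inv //; split.
  by apply: weight_mulT => //; apply: weightD; [apply: stein_weight | case: ds].
move=> a pa; rewrite dot_mulmx trmxK.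
apply: dom_pos; first exact: nu_dom.
by apply: hv.
Qed.


Definition Pp (mu c : 'rV[R]_n) := (0 < dot mu c) || ((dot mu c == 0) && (0 < dot c xi)).

Lemma mulmxTK g x : weyl rs g -> x *m g *m g^T = x.
Proof. by move/weyl_orth => h; rewrite -mulmxA h mulmx1. Qed.
Lemma mulmxKT g x : weyl rs g -> x *m g^T *m g = x.
Proof. by move/weyl_orth/orthT => h; rewrite -mulmxA h mulmx1. Qed.

Lemma claim v sg c : weyl rs v -> dominant rs xi sg -> c \in rs ->
  posr (c *m v) = Pp ((stein v + sg) *m v^T) c.
Proof.
move=> wv ds cr.
set nu := stein v + sg.
have hdom := nu_dom v ds.
have hpos : forall b, posr b -> 0 <= dot nu b by move=> b; apply: dom_pos.
have S : forall d, posr d -> dot nu d = 0 -> posr (d *m v^T).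
  move=> d pd d0; have [l [al ln ed]] := posr_decomp pd.
  have hx : forall x, x \in l -> dot nu x = 0.
    apply: sum_eq0_seq; last by rewrite -dot_sumr -ed.
    by move=> x xl; apply/hpos/simple_posr/(allP al).
  have px : forall x, x \in l -> posr (x *m v^T).
    move=> x xl; have sx : simple x by apply: (allP al).
    have xr := simple_rs sx.
    case npx : (posr (x *m v^T)) => //.
    have nx : negr (x *m invmx v).
      by rewrite weyl_inv //; apply: notposr_negr; [exact: weyl_rsT | rewrite npx].
    have := hx x xl; move/eqP; rewrite -coroot_eq0 // /nu dotDl stein_coroot // nx.
    case: ds => _ /(_ x sx); move=> h1 /eqP /= h2; exfalso; lra.
  have dr : d *m v^T \in rs by apply: weyl_rsT => //; apply: posr_rs.
  rewrite /Defs.posr dr /= ed mulmx_suml dot_suml.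
  apply: sum_gt0_seq => //; last by case: (l) ln.
  by move=> x xl _; apply/posr_xi/px.
have e : dot ((stein v + sg) *m v^T) c = dot nu (c *m v) by rewrite dot_mulmx trmxK.
have dr : c *m v \in rs by apply: weyl_rs.
rewrite /Pp e.
have [h|h|h] := ltgtP 0 (dot nu (c *m v)).
- rewrite orTb; case/orP: (root_dichot dr) => // nd.
  by have := hpos (- (c *m v)); rewrite posr_opp dotNr => /(_ nd); lra.
- rewrite /=; apply/negbTE/negP => p; have := hpos _ p; lra.
- rewrite /=.
  have ec : c *m v *m v^T = c by apply: mulmxTK.
  apply/idP/idP => [p|pc].
    by have := S _ p (esym h); rewrite ec => /posr_xi.
  have pc' : posr c by rewrite /Defs.posr cr.
  apply/negP => np.
  have nd := notposr_negr dr (introN idP np).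
  rewrite -posr_opp in nd.
  have := S _ nd; rewrite dotNr -h oppr0 => /(_ erefl).
  rewrite mulNmx ec posr_opp => nc; case: (posr_negr pc' nc).
Qed.

Lemma part2 J v1 s1 v2 s2 : WI rs xi J v1 -> dominant rs xi s1 ->
     WI rs xi J v2 -> dominant rs xi s2 ->
     fI rs xi fw v1 s1 = fI rs xi fw v2 s2 -> v1 = v2 /\ s1 = s2.
Proof.
case=> wv1 _ d1 [wv2 _] d2; rewrite /fI /wact !weyl_inv // => eq.
have hsame : forall c, c \in rs -> posr (c *m v1) = posr (c *m v2).
  by move=> c cr; rewrite (@claim v1 s1 c) // (@claim v2 s2 c) // eq.
set u := v1^T *m v2.
have wu : weyl rs u by apply: weyl_mul => //; apply: weyl_tr.
have pu : forall b, posr b -> posr (b *m u).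
  move=> b pb; have cr : b *m v1^T \in rs by apply: weyl_rsT => //; apply: posr_rs.
  by rewrite /u mulmxA -hsame // mulmxKT.
have [s [als eu]] := weyl_WS wu.
have u1 : u = 1%:M by rewrite eu; apply: WS_trivial => // b; rewrite -eu; apply: pu.
have ev : v1 = v2.
  have : v1 *m u = v2 by rewrite /u mulmxA weyl_orth // mul1mx.
  by rewrite u1 mulmx1.
split => //; subst v2.
have := congr1 (mulmx^~ v1) eq; rewrite /= !mulmxKT //.
by move/addrI.
Qed.


Lemma Pp_ge0 mu c : Pp mu c -> 0 <= dot mu c.
Proof. by case/orP => [/ltW //|/andP [/eqP -> _]]. Qed.

Lemma Pp_opp mu c : c \in rs -> Pp mu (- c) = ~~ Pp mu c.
Proof.
move=> cr; rewrite /Pp dotNr dotNl oppr_gt0 oppr_eq0 oppr_gt0.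
have := Hreg cr.
have [h|h|h] := ltgtP (dot mu c) 0 => //=.
by have [h'|h'|h'] := ltgtP (dot c xi) 0.
Qed.

Lemma Pp_sum mu w : weyl rs w -> (forall a, simple a -> Pp mu (a *m w^T)) ->
  forall b, posr b -> Pp mu (b *m w^T).
Proof.
move=> ww H b pb; have [l [al ln eb]] := posr_decomp pb.
have hx : forall x, x \in l -> Pp mu (x *m w^T) by move=> x xl; apply/H/(allP al).
have eD : dot mu (b *m w^T) = \sum_(x <- l) dot mu (x *m w^T) by rewrite eb mulmx_suml dot_sumr.
have Dge : 0 <= \sum_(x <- l) dot mu (x *m w^T).
  by apply: sum_ge0_seq => x xl _; apply/Pp_ge0/hx.
rewrite /Pp eD; move: Dge; rewrite le_eqVlt => /orP [/eqP D0|->//].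
rewrite -D0 ltxx eqxx /=.
have h0 := sum_eq0_seq (fun x xl => Pp_ge0 (hx x xl)) (esym D0).
rewrite eb mulmx_suml dot_suml; apply: sum_gt0_seq; last by case: (l) ln.
move=> x xl _; have := hx x xl; by rewrite /Pp h0 // ltxx eqxx /=.
Qed.

Variable J : seq 'rV[R]_n.
Variable mu : 'rV[R]_n.

Definition Bset w b := posr b && ~~ Pp mu (b *m w^T).

Lemma count_B w a : weyl rs w -> simple a -> Bset w a ->
  (count (Bset (w *m refl a)) rs < count (Bset w) rs)%N.
Proof.
move=> ww sa Ba.
have ar := simple_rs sa; have a0 := rs_neq0 ar.
set f := fun b => b *m refl a.
have ff : forall b, f (f b) = b by move=> b; rewrite /f -mulmxA refl_invol // mulmx1.
have pe : perm_eq [seq f b | b <- rs] rs.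
  apply: uniq_perm; first by rewrite map_inj_uniq ?rs_uniq //; apply: (can_inj ff).
    exact: rs_uniq.
  move=> y; apply/mapP/idP => [[z zr ->]|yr]; first by apply: rs_refl.
  by exists (f y); [apply: rs_refl | rewrite ff].
have -> : count (Bset (w *m refl a)) rs = count (Bset (w *m refl a)) [seq f b | b <- rs] by apply/esym/(permP pe).
rewrite count_map.
have ew : forall b, f b *m (w *m refl a)^T = b *m w^T.
  by move=> b; rewrite trmx_mul refl_tr mulmxA -(mulmxA b) refl_invol // mulmx1.
apply: (@count_lt _ _ _ _ a) => //.
- move=> b; rewrite /preim /Bset /= ew => /andP [pfb nP]; rewrite nP andbT.
  have br : b \in rs by rewrite -(ff b); apply: rs_refl => //; apply: posr_rs.
  case/orP: (root_dichot br) => // nb.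
  have [eb|ne] := eqVneq b (- a).
    move: nP; rewrite eb mulNmx Pp_opp ?negbK; last by apply: weyl_rsT.
    by move: Ba => /andP [_ /negP].
  have pnb : posr (- b) by rewrite posr_opp.
  have : posr (f (- b)) by apply: refl_simple_pos => //; rewrite -(inj_eq oppr_inj) opprK.
  by rewrite /f mulNmx posr_opp => nfb; case: (posr_negr pfb nfb).
- rewrite /preim /Bset /= /f sactE sact_self // posr_opp.
  by apply/negP => /andP [na _]; case: (posr_negr (simple_posr sa) na).
Qed.

Lemma descend N w : weyl rs w -> (count (Bset w) rs < N)%N ->
  exists v, weyl rs v /\ forall b, posr b -> Pp mu (b *m v^T).
Proof.
elim: N w => // N IH w ww hc.
case h: (has (fun a => simple a && Bset w a) rs).
  case/hasP: h => a ar /andP [sa Ba].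
  apply: (IH (w *m refl a)); first by apply: weyl_mulr.
  by apply: (leq_trans (count_B ww sa Ba)); rewrite -ltnS.
exists w; split => //; apply: Pp_sum => // a sa.
apply/negPn/negP => nP; move/negP: h; apply; apply/hasP; exists a; first exact: simple_rs.
by rewrite sa /Bset simple_posr.
Qed.

Lemma part3 : dominantI rs xi J mu ->
     exists v sigma, [/\ WI rs xi J v, dominant rs xi sigma &
                         fI rs xi fw v sigma = mu].
Proof.
move=> [wmu hmu].
have [v [wv hP]] := @descend (count (Bset 1%:M) rs).+1 1%:M (weyl1 rs) (ltnSn _).
set nu := mu *m v.
exists v, (nu - stein v); split.
- split => // a pa.
  have ha := hmu a pa.
  move: pa => /andP [/andP [ar _] pa].
  have gr : a *m v \in rs by apply: weyl_rs.
  case/orP: (root_dichot gr) => // ng.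
  have := hP (- (a *m v)); rewrite posr_opp => /(_ ng).
  rewrite mulNmx mulmxTK // Pp_opp // /Pp.
  move=> H; exfalso; move/negP: H; apply.
  move: ha; rewrite le_eqVlt => /orP [/eqP <-|->] //.
  by rewrite ltxx eqxx /= posr_xi.
- split.
    by apply: weightB; [apply: weight_mul | apply: stein_weight].
  move=> a sa; have ar := simple_rs sa.
  rewrite dotBl stein_coroot // weyl_inv //.
  have hPa := hP a (simple_posr sa).
  have e : dot nu a = dot mu (a *m v^T) by rewrite /nu dot_mulmx.
  case na: (negr (a *m v^T)); last first.
    by rewrite subr0 coroot_ge0 // e; apply: Pp_ge0.
  have pos : 0 < dot nu a.
    move: hPa; rewrite /Pp -e => /orP [//|/andP [_ hx]].
    by move: na => /andP [_ hn]; move: (lt_trans hn hx); rewrite ltxx.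
  have := pos; rewrite -(coroot_gt0 _ ar).
  have [z ez] := weight_mul wv wmu ar; rewrite -/nu in ez.
  rewrite ez ltr0z => zp.
  have : (1 <= z)%R by lia.
  by rewrite -(ler_int R) subr_ge0.
- by rewrite /fI /wact weyl_inv // addrC subrK mulmxTK.
Qed.

End RS.

Unset Implicit Arguments. Set Strict Implicit.

Theorem mainTheorem1 (R : realType) (n : nat) (rs : seq 'rV[R]_n)
    (xi : 'rV[R]_n) (J : seq 'rV[R]_n) (fw : 'rV[R]_n -> 'rV[R]_n) :
  root_system rs -> regular rs xi ->
  (forall a, a \in J -> simple rs xi a) ->
  fund_weights rs xi fw ->
  (* well defined *)
  (forall v sigma, WI rs xi J v -> dominant rs xi sigma ->
     dominantI rs xi J (fI rs xi fw v sigma)) /\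
  (* injective *)
  (forall v1 s1 v2 s2, WI rs xi J v1 -> dominant rs xi s1 ->
     WI rs xi J v2 -> dominant rs xi s2 ->
     fI rs xi fw v1 s1 = fI rs xi fw v2 s2 -> v1 = v2 /\ s1 = s2) /\
  (* surjective *)
  (forall mu, dominantI rs xi J mu ->
     exists v sigma, [/\ WI rs xi J v, dominant rs xi sigma &
                         fI rs xi fw v sigma = mu]).
Proof.
move=> Hrs Hreg _ Hfw; split; first by move=> v sg; apply: part1.
split; first by move=> v1 s1 v2 s2; apply: part2.
by move=> mu; apply: part3.
Qed.
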